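(* For $n\in\{0,1,2,\dots\}$ and $x\in(-1,1)$ let $e_n(x)=\mathrm{e}\bigl(1+\sum_{k=1}^n(-1)^k f_k x^k\bigr)$. Then: (i) if $x\in(0,1)$, then for every $k\ge1$, $$e_1(x)<e_3(x)<\dots<e_{2k-1}(x)<e_{2k+1}(x)<\dots<e(x)<\dots<e_{2k+2}(x)<e_{2k}(x)<\dots<e_2(x)<e_0(x),$$ i.e. the odd-indexed $e_{2k-1}(x)$ strictly increase and are all $<e(x)$, the even-indexed $e_{2k}(x)$ strictly decrease and are all $>e(x)$; (ii) if $x\in(-1,0)$, then $e_0(x)<e_1(x)<e_2(x)<\dots<e_n(x)<e_{n+1}(x)<\dots<e(x)$, i.e. $e_n(x)$ is strictly increasing in $n$ and $e_n(x)<e(x)$ for all $n$; (iii) $e_n(0)=e(0)=\mathrm{e}$ for all $n\ge0$.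
   Context: Let $e(x)=(1+x)^{1/x}$ for $x>-1$, $x\neq 0$, and $e(0)=\mathrm{e}$. For $x\in(-1,1)$, $e(x)=\mathrm{e}\bigl(1+\sum_{k=1}^\infty e_k x^k\bigr)$, with $e_0=1$; equivalently $e_k=\mathrm{e}^{-1}\sum_{i=1}^\infty \frac{S_1(k+i,i)}{(k+i)!}$ for $k\ge1$, where $S_1(p,q)$ are the signed Stirling numbers of the first kind (sign $(-1)^{p-q}$). Define $f_k=(-1)^k e_k$, so that $e(x)=\mathrm{e}\bigl(1+\sum_{k\ge1}(-1)^kf_kx^k\bigr)$. *)

(* Defs.v *)
From Stdlib Require Import Reals.
Open Scope R_scope.

Definition eFun (x : R) : R :=
  if Req_EM_T x 0 then exp 1 else Rpower (1 + x) (1 / x).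

(* Given the Taylor coefficients c = (e_k)_k of e(x)/e, f_k = (-1)^k e_k. *)
Definition fk (c : nat -> R) (k : nat) : R := (-1) ^ k * c k.

Fixpoint psum (c : nat -> R) (n : nat) (x : R) : R :=
  match n with
  | O => 0
  | S m => psum c m x + (-1) ^ (S m) * fk c (S m) * x ^ (S m)
  end.

Definition en (c : nat -> R) (n : nat) (x : R) : R := exp 1 * (1 + psum c n x).

(* Main.v *)
Require Import Defs.
From Stdlib Require Import Reals Lra Lia Psatz.
From Coquelicot Require Import Coquelicot.
Open Scope R_scope.

Definition uu (k : nat) : R := / (INR k + 2).

Lemma uu_pos k : 0 < uu k.
Proof. unfold uu. apply Rinv_0_lt_compat. pose proof (pos_INR k). lra. Qed.

Lemma uu_eq k : uu k * (INR k + 2) = 1.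
Proof. unfold uu. field. pose proof (pos_INR k). lra. Qed.

Lemma sum_pos_strict (A : nat -> R) n :
  (forall i, (i <= n)%nat -> 0 < A i) -> 0 < sum_f_R0 A n.
Proof.
  induction n; intros H; simpl.
  - apply H; lia.
  - assert (0 < sum_f_R0 A n) by (apply IHn; intros; apply H; lia).
    assert (0 < A (S n)) by (apply H; lia). lra.
Qed.

Section Kal.
Variable f : nat -> R.
Hypothesis f0 : f 0%nat = 1.
Hypothesis Rec : forall n, INR (S n) * f (S n) =
   sum_f_R0 (fun k => (1 - uu k) * f (n - k)%nat) n.

Lemma f_pos : forall n, 0 < f n.
Proof.
  assert (H : forall n j, (j <= n)%nat -> 0 < f j).
  { induction n; intros j Hj.
    - replace j with 0%nat by lia. lra.
    - destruct (Compare_dec.le_lt_dec j n) as [h|h]; [now apply IHn|].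
      replace j with (S n) by lia.
      assert (0 < INR (S n) * f (S n)).
      { rewrite Rec. apply sum_pos_strict. intros i Hi.
        apply Rmult_lt_0_compat.
        - pose proof (uu_eq i). pose proof (uu_pos i). pose proof (pos_INR i). nra.
        - apply IHn. lia. }
      pose proof (lt_0_INR (S n) ltac:(lia)). nra. }
  intros n; apply (H n); lia.
Qed.

Let Sp n := sum_f_R0 (fun k => uu k * f (n - k)%nat) n.
Let Tp n := sum_f_R0 (fun k => f (n - k)%nat) n.
Let b j := f j - f (S j).

Lemma Rec' n : INR (S n) * f (S n) = Tp n - Sp n.
Proof. rewrite Rec. unfold Tp, Sp. rewrite <- minus_sum. apply sum_eq; intros; ring. Qed.

Lemma Tp_S n : Tp (S n) = f (S n) + Tp n.
Proof. unfold Tp. rewrite decomp_sum by lia. simpl pred. reflexivity. Qed.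

Lemma Kstep m : INR (S (S m)) * b (S m) =
   uu (S m) - sum_f_R0 (fun k => uu k * b (m - k)%nat) m.
Proof.
  assert (E1 := Rec' (S m)). assert (E2 := Rec' m). rewrite Tp_S in E1.
  assert (E3 : Sp (S m) = sum_f_R0 (fun k => uu k * f (S (m - k))) m + uu (S m)).
  { unfold Sp. rewrite tech5. rewrite Nat.sub_diag, f0, Rmult_1_r. f_equal.
    apply sum_eq. intros i Hi. do 2 f_equal. lia. }
  assert (E4 : sum_f_R0 (fun k => uu k * b (m - k)%nat) m =
     Sp m - sum_f_R0 (fun k => uu k * f (S (m - k))) m).
  { unfold Sp. rewrite <- minus_sum. apply sum_eq. intros; unfold b; ring. }
  rewrite E4. unfold b. rewrite (S_INR (S m)) in *. rewrite (S_INR m) in *. lra.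
Qed.

Lemma b0 : b 0%nat = uu 0.
Proof. unfold b. assert (H := Rec 0). simpl in H. rewrite f0 in *. lra. Qed.

Lemma b_pos : forall n, 0 < b n.
Proof.
  assert (H : forall n j, (j <= n)%nat -> 0 < b j).
  { induction n; intros j Hj.
    - replace j with 0%nat by lia. rewrite b0. apply uu_pos.
    - destruct (Compare_dec.le_lt_dec j n) as [h|h]; [now apply IHn|].
      replace j with (S n) by lia. clear j Hj h.
      destruct n as [|m].
      + assert (H1 := Kstep 0). simpl in H1. rewrite b0 in H1.
        unfold uu in H1. simpl in H1. lra.
      + assert (K1 := Kstep (S m)). assert (K0 := Kstep m).
        rewrite decomp_sum in K1 by lia. simpl pred in K1.
        replace (S m - 0)%nat with (S m) in K1 by lia.
        assert (Hb : 0 < b (S m)) by (apply IHn; lia).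
        assert (Ineq : sum_f_R0 (fun i => uu (S i) * b (m - i)%nat) m * uu (S m)
                 <= sum_f_R0 (fun k => uu k * b (m - k)%nat) m * uu (S (S m))).
        { rewrite !(Rmult_comm (sum_f_R0 _ _)), !scal_sum. apply sum_Rle.
          intros i Hi. assert (0 < b (m - i)%nat) by (apply IHn; lia).
          assert (uu (S i) * uu (S m) <= uu i * uu (S (S m))).
          { unfold uu. rewrite !S_INR. apply le_INR in Hi.
            pose proof (pos_INR i).
            rewrite <- !Rinv_mult. apply Rinv_le_contravar.
            - nra.
            - nra. }
          nra. }
        change (sum_f_R0 (fun i => uu (S i) * b (S m - S i)%nat) m) with
          (sum_f_R0 (fun i => uu (S i) * b (m - i)%nat) m) in K1.
        set (S1 := sum_f_R0 (fun i => uu (S i) * b (m - i)%nat) m) in *.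
        set (S0 := sum_f_R0 (fun k => uu k * b (m - k)%nat) m) in *.
        pose proof (uu_eq (S (S m))). pose proof (uu_eq (S m)).
        pose proof (uu_pos (S (S m))). pose proof (uu_pos (S m)).
        assert (uu 0 = / 2) by (unfold uu; simpl; f_equal; ring).
        rewrite !S_INR in *. pose proof (pos_INR m).
        set (M := INR m) in *.
        set (v2 := uu (S (S m))) in *. set (v1 := uu (S m)) in *.
        assert (Hc : 0 < v2 * (M + 1 + 1) - v1 * uu 0) by nra.
        assert (0 < v1 * ((M+1+1+1) * b (S (S m)))) by nra.
        nra. }
  intros n; apply (H n); lia.
Qed.

End Kal.

Lemma rad_from_ex (a : nat -> R) :
  (forall x, Rabs x < 1 -> ex_pseries a x) ->
  forall x, Rabs x < 1 -> Rbar_lt (Rabs x) (CV_radius a).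
Proof.
  intros H x Hx.
  set (r := (Rabs x + 1) / 2).
  assert (Hr : Rabs r < 1 /\ Rabs x < Rabs r).
  { pose proof (Rabs_pos x). unfold r. rewrite Rabs_pos_eq; lra. }
  destruct (H r (proj1 Hr)) as [l Hl].
  apply is_pseries_R in Hl.
  assert (Hl0 := ex_series_lim_0 _ (ex_intro _ l Hl)).
  assert (Hle : Rbar_le (Rabs r) (CV_radius a)).
  { apply Rbar_not_lt_le. intro C. exact (CV_disk_outside a r C Hl0). }
  eapply Rbar_lt_le_trans; [|exact Hle]. simpl. lra.
Qed.

Definition aa (k : nat) : R := (-1) ^ k / INR (S k).

Lemma rad_aa : forall x, Rabs x < 1 -> Rbar_lt (Rabs x) (CV_radius aa).
Proof.
  intros x Hx.
  destruct (CV_radius_bounded aa) as [Hub _].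
  assert (H1 : Rbar_le 1 (CV_radius aa)).
  { apply Hub. exists 1. intros n. rewrite pow1, Rmult_1_r. unfold aa.
    rewrite Rabs_div, pow_1_abs, Rabs_pos_eq by (apply pos_INR || apply not_0_INR; lia).
    rewrite S_INR. pose proof (pos_INR n). apply Rle_div_l; lra. }
  eapply Rbar_lt_le_trans; [|exact H1]. simpl. lra.
Qed.

Lemma geom_alt y : Rabs y < 1 -> PSeries (fun n => (-1) ^ n) y = / (1 + y).
Proof.
  intros Hy. apply is_pseries_unique. apply is_pseries_R.
  replace (/ (1 + y)) with (/ (1 - - y)) by (f_equal; ring).
  eapply is_series_ext; [|apply is_series_geom; rewrite Rabs_Ropp; exact Hy].
  intros n; simpl. rewrite <- Rpow_mult_distr. f_equal; ring.
Qed.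

Lemma ln_series x : Rabs x < 1 -> ln (1 + x) = x * PSeries aa x.
Proof.
  intros Hx.
  set (bb := PS_incr_1 aa).
  assert (Hb : x * PSeries aa x = PSeries bb x).
  { unfold bb. rewrite PSeries_incr_1. reflexivity. }
  rewrite Hb.
  set (D := fun y => PSeries bb y - ln (1 + y)).
  assert (HD : forall c, Rabs (c - 0) <= Rabs x -> is_derive D c 0).
  { intros c Hc. rewrite Rminus_0_r in Hc.
    assert (Hc1 : Rabs c < 1) by lra.
    assert (Hrad : Rbar_lt (Rabs c) (CV_radius bb)).
    { unfold bb. rewrite CV_radius_incr_1. now apply rad_aa. }
    assert (Hp : 0 < 1 + c) by (apply Rabs_def2 in Hc1; lra).
    replace 0 with (PSeries (PS_derive bb) c - / (1 + c)).
    - unfold D. apply (is_derive_minus (fun y => PSeries bb y) (fun y => ln (1 + y)) c).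
      + now apply is_derive_PSeries.
      + replace (/ (1 + c)) with (scal 1 (/ (1 + c))) by (unfold scal; simpl; unfold mult; simpl; ring).
        apply (is_derive_comp ln (fun y => 1 + y)).
        * now apply is_derive_ln.
        * auto_derive; try easy; try ring.
    - rewrite <- geom_alt by exact Hc1. rewrite (PSeries_ext (PS_derive bb) (fun n => (-1)^n)).
      + ring.
      + intros n. unfold PS_derive, bb, PS_incr_1, aa. field. apply not_0_INR; lia. }
  destruct (MVT_cor4 D (fun _ => 0) 0 (Rabs x) HD x ltac:(rewrite Rminus_0_r; lra))
    as [c [Hc _]].
  unfold D in Hc. rewrite PSeries_0, Rplus_0_r, ln_1 in Hc.
  assert (E0 : bb 0%nat = 0) by reflexivity. rewrite E0 in Hc. lra.
Qed.

Lemma locally_disk (P : R -> Prop) x :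
  (forall y, Rabs y < 1 -> P y) -> Rabs x < 1 -> locally x P.
Proof.
  intros H Hx. assert (He : 0 < 1 - Rabs x) by lra.
  exists (mkposreal _ He). intros y Hy. apply H.
  change (Rabs (y - x) < 1 - Rabs x) in Hy.
  pose proof (Rabs_triang_inv y x). lra.
Qed.

Lemma rec_c (c : nat -> R) :
  (forall x, -1 < x < 1 -> Pser c x (eFun x / exp 1)) ->
  forall n, PS_derive c n = PS_mult (PS_derive aa) c n.
Proof.
  intros Hyp.
  assert (Hc : forall x, Rabs x < 1 -> is_pseries c x (eFun x / exp 1)).
  { intros x Hx. apply is_pseries_Reals. apply Hyp. apply Rabs_def2 in Hx. lra. }
  assert (radc : forall x, Rabs x < 1 -> Rbar_lt (Rabs x) (CV_radius c)).
  { apply rad_from_ex. intros x Hx. eexists. now apply Hc. }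
  assert (rada : forall x, Rabs x < 1 -> Rbar_lt (Rabs x) (CV_radius (PS_derive aa))).
  { intros x Hx. rewrite CV_radius_derive. now apply rad_aa. }
  assert (Peq : forall x, Rabs x < 1 -> PSeries c x = exp (PSeries aa x - 1)).
  { intros x Hx. rewrite (is_pseries_unique _ _ _ (Hc x Hx)). unfold eFun.
    destruct (Req_EM_T x 0) as [->|Hn].
    - rewrite PSeries_0. unfold aa. simpl. replace (1 / 1 - 1) with 0 by field.
      rewrite exp_0. field. apply Rgt_not_eq, exp_pos.
    - unfold Rpower. rewrite ln_series by exact Hx.
      replace (1 / x * (x * PSeries aa x)) with (PSeries aa x) by (field; exact Hn).
      replace (PSeries aa x) with ((PSeries aa x - 1) + 1) at 1 by ring.
      rewrite exp_plus. field. apply Rgt_not_eq, exp_pos. }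
  assert (Dq : forall x, Rabs x < 1 ->
     PSeries (PS_derive c) x = PSeries (PS_mult (PS_derive aa) c) x).
  { intros x Hx. rewrite PSeries_mult by auto.
    assert (H1 := is_derive_PSeries c x (radc x Hx)).
    assert (H2 : is_derive (fun y => exp (PSeries aa y - 1)) x
                  (scal (minus (PSeries (PS_derive aa) x) zero) (exp (PSeries aa x - 1)))).
    { apply (is_derive_comp exp (fun y => PSeries aa y - 1)).
      - apply is_derive_exp.
      - apply (is_derive_minus (PSeries aa) (fun _ => 1) x).
        + apply is_derive_PSeries. now apply rad_aa.
        + exact (is_derive_const (K := R_AbsRing) (V := R_NormedModule) 1 x). }
    apply is_derive_ext_loc with (g := PSeries c) in H2.
    - apply is_derive_unique in H1. apply is_derive_unique in H2. rewrite <- H1, H2.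
      rewrite <- Peq by exact Hx. unfold scal, minus, plus, opp, mult; simpl.
      unfold mult; simpl. change (zero : R) with 0; ring.
    - apply locally_disk; [|exact Hx]. intros y Hy. symmetry. now apply Peq. }
  intros n. apply PSeries_ext_recip.
  - rewrite CV_radius_derive. replace (Finite 0) with (Finite (Rabs 0)) by (f_equal; apply Rabs_R0).
    apply radc. rewrite Rabs_R0; lra.
  - replace (Finite 0) with (Finite (Rabs 0)) by (f_equal; apply Rabs_R0).
    apply rad_from_ex; [|rewrite Rabs_R0; lra].
    intros x Hx. apply ex_pseries_mult; auto.
  - apply locally_disk; [|rewrite Rabs_R0; lra]. exact Dq.
Qed.

Lemma alt_lemma (t : nat -> R) L :
  (forall k, 0 < t k) -> (forall k, t (S k) < t k) ->
  Un_cv (fun n => sum_f_R0 (fun k => (-1) ^ k * t k) n) L ->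
  forall k,
   sum_f_R0 (fun k => (-1) ^ k * t k) (2 * k + 1) < sum_f_R0 (fun k => (-1) ^ k * t k) (2 * k + 3) /\
   sum_f_R0 (fun k => (-1) ^ k * t k) (2 * k + 2) < sum_f_R0 (fun k => (-1) ^ k * t k) (2 * k) /\
   sum_f_R0 (fun k => (-1) ^ k * t k) (2 * k + 1) < L /\
   L < sum_f_R0 (fun k => (-1) ^ k * t k) (2 * k).
Proof.
  intros Hp Hd Hcv.
  set (Sn := fun n => sum_f_R0 (fun k => (-1) ^ k * t k) n) in *.
  assert (Step : forall n, Sn (S (S n)) = Sn n + (-1) ^ (S n) * (t (S n) - t (S (S n)))).
  { intros n. unfold Sn. rewrite !tech5. simpl. ring. }
  assert (Odd : forall k, Sn (2 * k + 1)%nat < Sn (2 * k + 3)%nat).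
  { intros k. replace (2 * k + 3)%nat with (S (S (2 * k + 1))) by lia.
    rewrite Step. replace (S (2 * k + 1)) with (2 * S k)%nat by lia.
    rewrite pow_1_even. pose proof (Hd (2 * S k)%nat). lra. }
  assert (Even : forall k, Sn (2 * k + 2)%nat < Sn (2 * k)%nat).
  { intros k. replace (2 * k + 2)%nat with (S (S (2 * k))) by lia.
    rewrite Step. rewrite pow_1_odd. pose proof (Hd (S (2 * k))). lra. }
  assert (CO : Un_cv (fun k => Sn (2 * k + 1)%nat) L).
  { intros eps He. destruct (Hcv eps He) as [N HN]. exists N. intros n Hn.
    apply HN. lia. }
  assert (CE : Un_cv (fun k => Sn (2 * k)%nat) L).
  { intros eps He. destruct (Hcv eps He) as [N HN]. exists N. intros n Hn.
    apply HN. lia. }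
  assert (GO : Un_growing (fun k => Sn (2 * k + 1)%nat)).
  { intros n. replace (2 * S n + 1)%nat with (2 * n + 3)%nat by lia. left. apply Odd. }
  assert (GE : Un_decreasing (fun k => Sn (2 * k)%nat)).
  { intros n. replace (2 * S n)%nat with (2 * n + 2)%nat by lia. left. apply Even. }
  intros k. split; [apply Odd|]. split; [apply Even|]. split.
  - pose proof (growing_ineq _ _ GO CO (S k)). cbv beta in H.
    replace (2 * S k + 1)%nat with (2 * k + 3)%nat in H by lia.
    pose proof (Odd k). lra.
  - pose proof (decreasing_ineq _ _ GE CE (S k)). cbv beta in H.
    replace (2 * S k)%nat with (2 * k + 2)%nat in H by lia.
    pose proof (Even k). lra.
Qed.

Lemma pos_lemma (s : nat -> R) L :
  (forall k, 0 < s k) ->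
  Un_cv (fun n => sum_f_R0 s n) L ->
  forall n, sum_f_R0 s n < sum_f_R0 s (S n) /\ sum_f_R0 s n < L.
Proof.
  intros Hp Hcv.
  assert (G : Un_growing (fun n => sum_f_R0 s n)).
  { intros n. rewrite tech5. pose proof (Hp (S n)). lra. }
  intros n. assert (sum_f_R0 s n < sum_f_R0 s (S n)) by (rewrite tech5; pose proof (Hp (S n)); lra).
  split; [exact H|]. pose proof (growing_ineq _ _ G Hcv (S n)). lra.
Qed.

Lemma psum_eq (c : nat -> R) n x : c 0%nat = 1 ->
  1 + psum c n x = sum_f_R0 (fun k => c k * x ^ k) n.
Proof.
  intros c0. induction n.
  - simpl. rewrite c0. ring.
  - change (psum c (S n) x) with (psum c n x + (-1)^(S n) * fk c (S n) * x^(S n)).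
    rewrite tech5. rewrite <- IHn. unfold fk.
    assert (E : (-1) ^ S n * (-1) ^ S n = 1).
    { rewrite <- Rpow_mult_distr. replace (-1 * -1) with 1 by ring. apply pow1. }
    replace ((-1) ^ S n * ((-1) ^ S n * c (S n)) * x ^ S n)
      with (((-1) ^ S n * (-1) ^ S n) * c (S n) * x ^ S n) by ring.
    rewrite E. ring.
Qed.

Lemma sq1 k : (-1) ^ k * (-1) ^ k = 1.
Proof. rewrite <- Rpow_mult_distr. replace (-1 * -1) with 1 by ring. apply pow1. Qed.

Theorem mainTheorem3 :
  forall c : nat -> R,
    c 0%nat = 1 ->
    (forall x, -1 < x < 1 -> Pser c x (eFun x / exp 1)) ->
    (forall x, 0 < x < 1 ->
        (forall k : nat,
            en c (2 * k + 1) x < en c (2 * k + 3) x /\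
            en c (2 * k + 2) x < en c (2 * k) x) /\
        (forall k : nat,
            en c (2 * k + 1) x < eFun x /\ eFun x < en c (2 * k) x)) /\
    (forall x, -1 < x < 0 ->
        forall n : nat, en c n x < en c (S n) x /\ en c n x < eFun x) /\
    (forall n : nat, en c n 0 = eFun 0 /\ eFun 0 = exp 1).
Proof.
  intros c c0 Hyp.
  set (f := fk c).
  assert (f0 : f 0%nat = 1) by (unfold f, fk; simpl; rewrite c0; ring).
  assert (Rec : forall n, INR (S n) * f (S n) =
     sum_f_R0 (fun k => (1 - uu k) * f (n - k)%nat) n).
  { intros n. assert (H := rec_c c Hyp n). unfold PS_derive, PS_mult in H.
    assert (H2 : sum_f_R0 (fun k => INR (S k) * aa (S k) * c (n - k)%nat) n =
       (-1) ^ S n * sum_f_R0 (fun k => (1 - uu k) * f (n - k)%nat) n).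
    { rewrite scal_sum. apply sum_eq. intros i Hi. unfold f, fk, aa, uu.
      assert (Ep : (-1) ^ S i * (-1) ^ (n - i) = (-1) ^ S n).
      { rewrite <- pow_add. f_equal. lia. }
      rewrite <- Ep. pose proof (sq1 (n - i)) as Hpp.
      set (p := (-1) ^ (n - i)) in *. set (q := (-1) ^ S i) in *.
      rewrite !S_INR. pose proof (pos_INR i).
      replace (INR i + 1 + 1) with (INR i + 2) by ring.
      transitivity ((1 - / (INR i + 2)) * (p * p) * c (n - i)%nat * q).
      - rewrite Hpp. field. lra.
      - ring. }
    rewrite H2 in H. change (f (S n)) with ((-1) ^ S n * c (S n)).
    replace (INR (S n) * ((-1) ^ S n * c (S n))) with ((-1) ^ S n * (INR (S n) * c (S n))) by ring.
    rewrite H, <- Rmult_assoc, sq1. ring. }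
  assert (fpos : forall n, 0 < f n) by (apply f_pos; auto).
  assert (fdec : forall n, f (S n) < f n).
  { intros n. pose proof (b_pos f f0 Rec n). simpl in H. lra. }
  assert (Ee : forall n x, en c n x = exp 1 * sum_f_R0 (fun k => c k * x ^ k) n).
  { intros n x. unfold en. rewrite psum_eq by exact c0. reflexivity. }
  assert (cf : forall k, c k = (-1) ^ k * f k).
  { intros k. unfold f, fk. rewrite <- Rmult_assoc, sq1. ring. }
  assert (He : forall x, eFun x = exp 1 * (eFun x / exp 1)).
  { intros x. field. apply Rgt_not_eq, exp_pos. }
  pose proof (exp_pos 1) as Hexp.
  split; [|split].
  - intros x Hx.
    assert (Hcv : Un_cv (fun n => sum_f_R0 (fun k => (-1) ^ k * (f k * x ^ k)) n)
                    (eFun x / exp 1)).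
    { assert (Hp := Hyp x ltac:(lra)). intros eps Heps.
      destruct (Hp eps Heps) as [N HN]. exists N. intros n Hn.
      rewrite <- (sum_eq (fun k => c k * x ^ k)). { apply HN; exact Hn. }
      intros i _. rewrite cf. ring. }
    assert (Ht : forall k, 0 < f k * x ^ k).
    { intros k. apply Rmult_lt_0_compat; [apply fpos|apply pow_lt; lra]. }
    assert (Htd : forall k, f (S k) * x ^ S k < f k * x ^ k).
    { intros k. simpl. pose proof (fpos (S k)). pose proof (fdec k).
      pose proof (pow_lt x k ltac:(lra)).
      assert (f (S k) * x < f k) by nra.
      replace (f (S k) * (x * x ^ k)) with ((f (S k) * x) * x ^ k) by ring.
      apply Rmult_lt_compat_r; assumption. }
    pose proof (alt_lemma _ _ Ht Htd Hcv) as AL.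
    assert (Es : forall n, en c n x = exp 1 * sum_f_R0 (fun k => (-1) ^ k * (f k * x ^ k)) n).
    { intros n. rewrite Ee. f_equal. apply sum_eq. intros i _. rewrite cf. ring. }
    split; intros k; rewrite !Es; destruct (AL k) as [A1 [A2 [A3 A4]]];
      [|rewrite (He x)]; split; apply Rmult_lt_compat_l; auto.
  - intros x Hx.
    assert (Hs : forall k, 0 < c k * x ^ k).
    { intros k. rewrite cf. replace ((-1) ^ k * f k * x ^ k) with (f k * ((-1) ^ k * x ^ k)) by ring.
      rewrite <- Rpow_mult_distr. apply Rmult_lt_0_compat; [apply fpos|apply pow_lt; lra]. }
    assert (Hp := Hyp x ltac:(lra)).
    intros n. destruct (pos_lemma _ _ Hs Hp n) as [P1 P2].
    rewrite !Ee, (He x). split; apply Rmult_lt_compat_l; auto.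
  - intros n. assert (E0 : eFun 0 = exp 1).
    { unfold eFun. destruct (Req_EM_T 0 0); [reflexivity|congruence]. }
    split; [|exact E0]. rewrite E0. unfold en.
    assert (psum c n 0 = 0).
    { induction n; simpl; [reflexivity|]. rewrite IHn. ring. }
    rewrite H. ring.
Qed.
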